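(* Let $x\in\mathrm{Modasc}_n$. An entry $x(i)=k>1$ is the leftmost occurrence of the integer $k$ in $x$ if and only if $x(i-1)<x(i)$. In particular, $x$ is a Cayley permutation.
   Context: A Cayley permutation is a word of positive integers in which every integer from $1$ to its maximum occurs. Modified ascent sequences: $\mathrm{Modasc}_0=\{\text{empty word}\}$, $\mathrm{Modasc}_1=\{1\}$; for $n\ge2$, $x\in\mathrm{Modasc}_n$ iff there is $v\in\mathrm{Modasc}_{n-1}$ with last letter $b$ such that either $x=va$ with $1\le a\le b$, or $x=\tilde va$ with $b<a\le2+\mathrm{asc}(v)$, where $\mathrm{asc}(v)=|\{i:v(i)<v(i+1)\}|$ and $\tilde v$ is obtained from $v$ by increasing every entry $c\ge a$ by one. *)

(* Defs.v *)
From mathcomp Require Import all_boot.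
Set Implicit Arguments. Unset Strict Implicit. Unset Printing Implicit Defensive.

(* Words are sequences of nat; position i (1-indexed in the paper) is
   nth 0 x (i-1) here, i.e. 0-indexed. *)

Definition asc (v : seq nat) : nat :=
  count (fun p : nat * nat => p.1 < p.2) (zip v (behead v)).

Definition tilde (v : seq nat) (a : nat) : seq nat :=
  map (fun c => if a <= c then c.+1 else c) v.

Inductive modasc : nat -> seq nat -> Prop :=
| modasc0 : modasc 0 [::]
| modasc1 : modasc 1 [:: 1]
| modasc_low n v a :
    1 <= n -> modasc n v ->
    1 <= a <= last 0 v -> modasc n.+1 (rcons v a)
| modasc_high n v a :
    1 <= n -> modasc n v ->
    last 0 v < a <= (asc v).+2 -> modasc n.+1 (rcons (tilde v a) a).

Definition maxw (x : seq nat) : nat := foldr maxn 0 x.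

Definition cayley_perm (x : seq nat) : Prop :=
  all (fun c => 0 < c) x /\ forall k, 1 <= k <= maxw x -> k \in x.

(* Main.v *)
Require Import Defs.
From mathcomp Require Import all_boot.
From mathcomp Require Import zify.

Definition fa (a c : nat) := if a <= c then c.+1 else c.

Lemma fa_lt a c d : (fa a c < fa a d) = (c < d).
Proof. rewrite /fa; case: ifP => h1; case: ifP => h2; apply/idP/idP => ?; lia. Qed.

Lemma asc_cons2 x y s : asc [:: x, y & s] = (x < y) + asc (y :: s).
Proof. by []. Qed.

Lemma asc_rcons0 x s a : asc (rcons (x :: s) a) = asc (x :: s) + (last x s < a).
Proof.
elim: s x => [|y s IH] x.
  by rewrite /asc /= !addn0.
rewrite /= !asc_cons2 -addnA; congr (_ + _); exact: IH.
Qed.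

Lemma asc_rcons v a : 0 < size v -> asc (rcons v a) = asc v + (last 0 v < a).
Proof. by case: v => // x s _; rewrite asc_rcons0. Qed.

Lemma asc_map f s : (forall c d, (f c < f d) = (c < d)) -> asc (map f s) = asc s.
Proof.
move=> Hf; elim: s => [|x s IH] //; case: s IH => [|y s] IH //.
move: IH => /= IH.
by rewrite !asc_cons2 Hf IH.
Qed.

Lemma last_map0 f s : f 0 = 0 -> last 0 (map f s) = f (last 0 s).
Proof. by move=> f0; case: s => //= c s; exact: last_map. Qed.

Lemma last_in v : 0 < size v -> last 0 v \in v.
Proof. by case: v => // c s _; rewrite /= mem_last. Qed.

Definition Q (x : seq nat) := forall i, i < size x ->
  (index (nth 0 x i) x == i) = ((i == 0) || (nth 0 x i.-1 < nth 0 x i)).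

Lemma index_rcons (x a : nat) v :
  index x (rcons v a) = if x \in v then index x v else size v + (a != x).
Proof. by rewrite -cats1 index_cat /=; case: eqP. Qed.

Lemma Q_rcons v a : 0 < size v -> Q v -> (a \notin v) = (last 0 v < a) ->
  Q (rcons v a).
Proof.
move=> sv Hq Ha i; rewrite size_rcons ltnS leq_eqVlt => /orP [/eqP-> | lt].
  rewrite !nth_rcons ltnn eqxx.
  have -> : (size v).-1 < size v by lia.
  rewrite nth_last -Ha index_rcons.
  have -> : (size v == 0) = false by lia.
  case: (boolP (a \in v)) => ha /=.
    by apply/negbTE; rewrite neq_ltn index_mem ha.
  by rewrite eqxx addn0 eqxx.
rewrite !nth_rcons lt.
have -> : i.-1 < size v by lia.
rewrite index_rcons mem_nth //.
exact: Hq.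
Qed.

Lemma Q_map f v : f 0 = 0 -> (forall c d, (f c < f d) = (c < d)) -> Q v -> Q (map f v).
Proof.
move=> f0 Hf Hq i; rewrite size_map => lt.
have inj : injective f.
  move=> c d e; case: (ltngtP c d) => [h|h|->] //.
    by have := Hf c d; rewrite h e ltnn.
  by have := Hf d c; rewrite h e ltnn.
rewrite (nth_map 0) // (nth_map 0); last by lia.
by rewrite index_map // Hf; apply: Hq.
Qed.

Lemma step_low v a : 0 < size v -> nth 0 v 0 = 1 ->
  (forall k, (k \in v) = (0 < k <= (asc v).+1)) -> Q v -> 1 <= a <= last 0 v ->
  [/\ nth 0 (rcons v a) 0 = 1,
      (forall k, (k \in rcons v a) = (0 < k <= (asc (rcons v a)).+1)) & Q (rcons v a)].
Proof.
move=> sv h1 Hm Hq ha.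
have hl := Hm (last 0 v); rewrite last_in // in hl.
have av : a \in v by rewrite Hm; lia.
have nl : (last 0 v < a) = false by lia.
split.
- by rewrite nth_rcons sv.
- move=> k; rewrite asc_rcons // nl addn0 mem_rcons inE -Hm.
  by case: eqP => // ->; rewrite av.
- by apply: Q_rcons => //; rewrite av nl.
Qed.

Lemma step_high v a : 0 < size v -> nth 0 v 0 = 1 ->
  (forall k, (k \in v) = (0 < k <= (asc v).+1)) -> Q v -> last 0 v < a <= (asc v).+2 ->
  let x := rcons (map (fa a) v) a in
  [/\ nth 0 x 0 = 1,
      (forall k, (k \in x) = (0 < k <= (asc x).+1)) & Q x].
Proof.
move=> sv h1 Hm Hq ha x.
have hl := Hm (last 0 v); rewrite last_in // in hl.
have f0 : fa a 0 = 0 by rewrite /fa; case: ifP => //; lia.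
have lm : last 0 (map (fa a) v) = last 0 v.
  by rewrite last_map0 // /fa; case: ifP => //; lia.
have nin : a \notin map (fa a) v.
  by apply/mapP => [[c _]]; rewrite /fa; case: ifP => ?; lia.
have sm : 0 < size (map (fa a) v) by rewrite size_map.
have ax : asc x = (asc v).+1.
  rewrite /x asc_rcons // lm (@asc_map (fa a) v (@fa_lt a)).
  have -> : last 0 v < a by lia.
  by rewrite addn1.
split.
- rewrite /x nth_rcons sm (nth_map 0) // h1 /fa; case: ifP => //; lia.
- move=> k; rewrite ax /x mem_rcons inE.
  apply/idP/idP.
    case/orP => [/eqP-> | /mapP [c cv ->]]; first by lia.
    have := Hm c; rewrite cv => /esym hc.
    by rewrite /fa; case: ifP => ?; lia.
  move=> hk; case: (ltngtP k a) => [lt | gt | ->]; last by [].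
    apply/orP; right; apply/mapP; exists k.
      by rewrite Hm; lia.
    by rewrite /fa leqNgt lt.
  apply/orP; right; apply/mapP; exists k.-1.
    by rewrite Hm; lia.
  rewrite /fa; have -> : a <= k.-1 by lia.
  lia.
- apply: Q_rcons => //; first by apply: Q_map => //; exact: fa_lt.
  by rewrite nin lm; lia.
Qed.

Lemma inv n x : modasc n x -> size x = n /\ (0 < n ->
  [/\ nth 0 x 0 = 1, (forall k, (k \in x) = (0 < k <= (asc x).+1)) & Q x]).
Proof.
elim => [|| m v a n1 Hv [sv IH] ha | m v a n1 Hv [sv IH] ha].
- by [].
- split=> // _; split=> //.
    by move=> k; case: k => [|[|k]].
  by move=> i; case: i.
- rewrite size_rcons sv; split=> // _.
  case: (IH n1) => h1 hm hq; apply: step_low => //; lia.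
- rewrite size_rcons size_map sv; split=> // _.
  case: (IH n1) => h1 hm hq; apply: step_high => //; lia.
Qed.

Lemma maxw_mem x : 0 < size x -> maxw x \in x.
Proof.
elim: x => [|c s IH] // _.
case: s IH => [|d s] IH.
  by rewrite /maxw /= maxn0 inE.
rewrite inE; change (maxw (c :: d :: s)) with (maxn c (maxw (d :: s))).
case: (leqP c (maxw (d :: s))) => h.
  by rewrite IH ?orbT.
by rewrite eqxx.
Qed.

Theorem lemma2p1 (n : nat) (x : seq nat) :
  modasc n x ->
  (forall i, i < size x -> 1 < nth 0 x i ->
     (index (nth 0 x i) x == i) <-> (0 < i /\ nth 0 x i.-1 < nth 0 x i))
  /\ cayley_perm x.
Proof.
move=> H; have [sx] := inv _ _ H.
move: H sx; case: n => [|n] H sx.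
  move=> _; case: x H sx => // _ _; split => //; split => // k; rewrite /maxw /=; lia.
case=> // h1 hm hq; split.
  move=> i lt gt; rewrite (hq i lt).
  case: i lt gt => [|i] lt gt; first by rewrite h1 in gt.
  by split => [/= -> | [_ ->]].
split.
  by apply/allP => c; rewrite hm => /andP [].
move=> k hk; rewrite hm.
have := @maxw_mem x; rewrite sx hm => /(_ isT); lia.
Qed.
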